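(* Let $a_1,a_2,\dots$ be a sequence of natural numbers. Assume there are constants $B$ and $C$ such that $a_n\le Bn$ for each $n$, and such that each natural number appears at most $C$ times in the sequence. If $\alpha$ is irrational and the distribution of $\alpha a_n\bmod 1$ converges to a probability measure $\mu$ on the circle, then $\mu$ is absolutely continuous with respect to Lebesgue measure.
   Context: ''The distribution of $\alpha a_n\bmod 1$ converges to $\mu$'' means that $\frac1N\sum_{n=1}^N\delta_{\alpha a_n\bmod 1}$ converges weakly to $\mu$ on $\mathbb{R}/\mathbb{Z}$. *)

(* Defs.v *)
From HB Require Import structures.
From mathcomp Require Import all_boot all_order all_algebra.
From mathcomp Require Import all_classical all_reals all_analysis.
Set Implicit Arguments. Unset Strict Implicit. Unset Printing Implicit Defensive.
Import Order.TTheory GRing.Theory Num.Theory.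
Local Open Scope ring_scope.

Definition frac1 {R : realType} (x : R) : R := x - (Num.floor x)%:~R.

(* Main.v *)
Require Import Defs.
From HB Require Import structures.
From mathcomp Require Import all_boot all_order all_algebra.
From mathcomp Require Import all_classical all_reals all_analysis.
Import Order.TTheory GRing.Theory Num.Theory numFieldNormedType.Exports.
Local Open Scope classical_set_scope.
Local Open Scope ring_scope.
From mathcomp Require Import zify ring lra.


Section P1.
Variable R : realType.
Implicit Types x y z : R.

Definition rnd (y : R) : int := Num.floor (y + 2^-1).
Definition dZ (y : R) : R := `|y - (rnd y)%:~R|.

Lemma dZ_half y : dZ y <= 2^-1.
Proof.
rewrite /dZ /rnd; have /andP[h1 h2] := floor_itv (y + 2^-1).
move: h2; rewrite intrD => h2.
rewrite ler_norml; apply/andP; split; lra.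
Qed.

Lemma dZ_min y (n : int) : dZ y <= `|y - n%:~R|.
Proof.
have [->|ne] := eqVneq n (rnd y); first by [].
have h1 : 1 <= `|(n - rnd y)%:~R : R|.
  rewrite -intr_norm ler1z.
  move: ne; rewrite -subr_eq0; move: (n - rnd y) => k; lia.
have := dZ_half y; rewrite /dZ => h.
have e : (n - rnd y)%:~R = (y - (rnd y)%:~R) - (y - n%:~R) :> R by rewrite intrB; ring.
rewrite e in h1.
have := ler_normB (y - (rnd y)%:~R) (y - n%:~R). 
lra.
Qed.

Lemma dZ_ge0 y : 0 <= dZ y.
Proof. exact: normr_ge0. Qed.

Lemma dZ_lip y z : dZ y <= `|y - z| + dZ z.
Proof.
apply: (le_trans (dZ_min y (rnd z))).
rewrite /dZ (_ : y - (rnd z)%:~R = (y - z) + (z - (rnd z)%:~R)); last by ring.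
exact: ler_normD.
Qed.

Lemma dZ_per y : dZ (y + 1) = dZ y.
Proof.
apply/eqP; rewrite eq_le; apply/andP; split.
  have := dZ_min (y + 1) (rnd y + 1); rewrite intrD.
  by rewrite (_ : y + 1 - ((rnd y)%:~R + 1) = y - (rnd y)%:~R) //; ring.
have := dZ_min y (rnd (y + 1) - 1); rewrite intrB.
by rewrite (_ : y - ((rnd (y + 1))%:~R - 1) = y + 1 - (rnd (y+1))%:~R) //; ring.
Qed.

Lemma dZ_lt y r : dZ y < r -> `|y - (rnd y)%:~R| < r.
Proof. by []. Qed.


Lemma sum_ind_count (P : pred nat) (s : seq nat) :
  \sum_(j <- s) (P j)%:R = (count P s)%:R :> R.
Proof.
elim: s => [|x s IH]; first by rewrite big_nil.
by rewrite big_cons IH /= natrD.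
Qed.

Lemma trunc_aux (L : R) (m n : nat) : 0 <= L -> m%:R - n%:R < L ->
  (m <= n + Num.trunc L)%N.
Proof.
move=> L0 h; case: (leqP m n) => [mn|nm]; first by apply: leq_trans mn (leq_addr _ _).
have: ((m - n)%N <= Num.trunc L)%N.
  by rewrite truncn_ge_nat // natrB; [exact: ltW | exact: ltnW].
by rewrite leq_subLR.
Qed.

Lemma count_ap (u th r : R) (T : nat) : th != 0 -> 0 < r ->
  \sum_(0 <= j < T) ((`|u + j%:R * th| < r)%R : nat)%:R <= 4 * r / `|th| + 1.
Proof.
move=> th0 r0.
pose P : pred nat := fun j => (`|u + j%:R * th| < r)%R.
change (\sum_(0 <= j < T) (P j)%:R <= 4 * r / `|th| + 1).
rewrite (sum_ind_count P).
have tp : 0 < `|th| by rewrite normr_gt0.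
set L := 2 * r / `|th|.
have L0 : 0 <= L by rewrite /L; apply: divr_ge0; lra.
have [/hasP[j0 _ Pj0]|/hasPn nP] := boolP (has P (index_iota 0 T)); last first.
  rewrite (eq_in_count (a2 := pred0)); last by move=> x /nP /negbTE.
  rewrite count_pred0; apply: addr_ge0 => //.
  by apply: divr_ge0 => //; lra.
have close j : P j -> j%:R - j0%:R < L /\ j0%:R - j%:R < L.
  move=> Pj; rewrite /P in Pj Pj0.
  have h : `|(j%:R - j0%:R) * th| < 2 * r.
    rewrite (_ : (j%:R - j0%:R) * th = (u + j%:R * th) - (u + j0%:R * th)); last by ring.
    apply: (le_lt_trans (ler_normB _ _)); lra.
  rewrite normrM in h.
  have h2 : `|j%:R - j0%:R : R| < L by rewrite /L ltr_pdivlMr //.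
  move: h2; rewrite ltr_norml => /andP[a b]; split; lra.
set Kn := Num.trunc L.
have sub : {subset seq.filter P (index_iota 0 T) <= iota (j0 - Kn) (Kn + Kn).+1}.
  move=> j; rewrite mem_filter => /andP[Pj _].
  have [c1 c2] := close j Pj.
  have a1 := @trunc_aux L _ _ L0 c1; have a2 := @trunc_aux L _ _ L0 c2.
  rewrite mem_iota; apply/andP; split; clear -a1 a2; lia.
have := uniq_leq_size (filter_uniq P (iota_uniq 0 (T - 0))) sub.
rewrite size_iota -size_filter => hs.
apply: (@le_trans _ _ ((Kn + Kn).+1)%:R); first by rewrite ler_nat.
have hK : Kn%:R <= L by rewrite truncn_le.
rewrite -addn1 natrD !natrD; rewrite /L in hK.
have -> : 4 * r / `|th| = 2 * (2 * r / `|th|) by ring.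
lra.
Qed.


Lemma count3 (y th r : R) (T : nat) : th != 0 -> 0 < r -> r <= 4^-1 ->
  T%:R * `|th| <= 1 ->
  \sum_(0 <= j < T) ((dZ (y + j%:R * th) < r)%R : nat)%:R <= 3 * (4 * r / `|th| + 1).
Proof.
move=> th0 r0 r4 Tth.
set n0 := rnd y.
pose I (n : int) (j : nat) : R := ((`|(y - n%:~R) + j%:R * th| < r)%R : nat)%:R.
have I0 n j : 0 <= I n j by rewrite /I ler0n.
apply: (@le_trans _ _ (\sum_(0 <= j < T) (I (n0 - 1) j + I n0 j + I (n0 + 1) j))).
  rewrite big_nat [X in _ <= X]big_nat; apply: ler_sum => j /andP[_ jT].
  case h: (dZ (y + j%:R * th) < r)%R; last first.
    by rewrite /= !addr_ge0.
  set m := rnd (y + j%:R * th).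
  have hm : `|y + j%:R * th - m%:~R| < r by [].
  have Im : I m j = 1.
    rewrite /I (_ : y - m%:~R + j%:R * th = y + j%:R * th - m%:~R); last by ring.
    by rewrite hm.
  have hy : `|y - n0%:~R| <= 2^-1 := dZ_half y.
  have hj : `|j%:R * th| <= 1.
    rewrite normrM normr_nat; apply: le_trans Tth.
    by apply: ler_wpM2r => //; rewrite ler_nat ltnW.
  have h2 : `|(m - n0)%:~R : R| < 2.
    rewrite intrB (_ : m%:~R - n0%:~R = (y - n0%:~R) + (j%:R * th) - (y + j%:R * th - m%:~R)); last by ring.
    apply: (le_lt_trans (ler_normB _ _)).
    apply: (@le_lt_trans _ _ (`|y - n0%:~R| + `|j%:R * th| + `|y + j%:R * th - m%:~R|)).
      by rewrite lerD2r ler_normD.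
    lra.
  move: h2; rewrite ltr_norml => /andP[h3 h4].
  have h5 : (-2 < m - n0)%R by rewrite -(ltr_int R) intrN.
  have h6 : (m - n0 < 2)%R by rewrite -(ltr_int R).
  have : m = n0 - 1 \/ m = n0 \/ m = n0 + 1 by clear -h5 h6; lia.
  have := I0 (n0 - 1) j; have := I0 n0 j; have := I0 (n0 + 1) j.
  by move=> ? ? ?; case=> [e|[e|e]]; rewrite e in Im; rewrite Im /=; lra.
rewrite !big_split /=.
have := count_ap (y - (n0 - 1)%:~R) th r T th0 r0.
have := count_ap (y - n0%:~R) th r T th0 r0.
have := count_ap (y - (n0 + 1)%:~R) th r T th0 r0.
rewrite /I; lra.
Qed.


Lemma frac1_itv x : 0 <= frac1 x < 1.
Proof.
rewrite /frac1; have /andP[h1 h2] := floor_itv x; rewrite intrD in h2.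
apply/andP; split; lra.
Qed.

Definition irr (alpha : R) := forall q : rat, alpha != ratr q.

Lemma pig_aux (alpha r : R) (i j : nat) : irr alpha -> (i < j)%N ->
  `|frac1 (alpha * i%:R) - frac1 (alpha * j%:R)| < r ->
  exists q : nat, exists p : int, (0 < q)%N /\ 0 < `|q%:R * alpha - p%:~R| <= r.
Proof.
move=> ha ij h.
exists (j - i)%N, (Num.floor (alpha * j%:R) - Num.floor (alpha * i%:R)).
have e : (j - i)%N%:R * alpha - (Num.floor (alpha * j%:R) - Num.floor (alpha * i%:R))%:~R
   = - (frac1 (alpha * i%:R) - frac1 (alpha * j%:R)).
  by rewrite natrB; [rewrite intrB /frac1; ring | exact: ltnW].
split; first by rewrite subn_gt0.
rewrite e normrN (ltW h) andbT normr_gt0.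
apply/negP => /eqP h0.
have qn0 : ((j - i)%N%:R : R) != 0 by rewrite pnatr_eq0 -lt0n subn_gt0.
set P := (Num.floor (alpha * j%:R) - Num.floor (alpha * i%:R)).
have := ha ((P%:~R : rat) / ((j - i)%N%:R : rat)).
rewrite fmorph_div rmorph_int rmorph_nat.
have e2 : (j - i)%N%:R * alpha - (Num.floor (alpha * j%:R) - Num.floor (alpha * i%:R))%:~R = 0.
  by rewrite e h0 oppr0.
apply/negP; rewrite negbK; apply/eqP.
apply: (mulfI qn0); rewrite mulrCA divff // mulr1.
by apply/eqP; rewrite -subr_eq0 e2.
Qed.

Lemma pigeon (alpha r : R) : irr alpha -> 0 < r ->
  exists q : nat, exists p : int, (0 < q)%N /\ 0 < `|q%:R * alpha - p%:~R| <= r.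
Proof.
move=> ha r0.
set k := Num.trunc (r^-1).
have hk : r^-1 < k.+1%:R by apply: truncnS_gt.
pose v (m : nat) := frac1 (alpha * m%:R).
pose box (m : 'I_k.+2) : 'I_k.+1 := inord (Num.trunc (k.+1%:R * v m)).
have boxv (m : 'I_k.+2) : (box m : nat) = Num.trunc (k.+1%:R * v m).
  rewrite /box inordK // ltnS -ltnS truncn_lt_nat.
    have /andP[_ h1] := frac1_itv (alpha * m%:R).
    by rewrite /v -[X in _ < X]mulr1 ltr_pM2l // ltr0n.
  by have /andP[h0 _] := frac1_itv (alpha * m%:R); rewrite mulr_ge0.
have /existsP [m1 /existsP [m2 /andP [ne /eqP e]]] :
    [exists m1, exists m2, (m1 != m2) && (box m1 == box m2)].
  apply: contraT => /existsPn H.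
  have inj : injective box.
    move=> x y exy; move: (H x) => /existsPn /(_ y).
    by rewrite exy eqxx andbT negbK => /eqP.
  by move: (leq_card box inj); rewrite !card_ord ltnn.
have close : `|v m1 - v m2| < r.
  have t1 := boxv m1; have t2 := boxv m2.
  rewrite e in t1; rewrite t1 in t2.
  have ge (m : 'I_k.+2) : 0 <= k.+1%:R * v m.
    by have /andP[h0 _] := frac1_itv (alpha * m%:R); rewrite mulr_ge0.
  have a1 : ((Num.trunc (k.+1%:R * v m1))%:R <= k.+1%:R * v m1) by rewrite truncn_le.
  have a2 : ((Num.trunc (k.+1%:R * v m2))%:R <= k.+1%:R * v m2) by rewrite truncn_le.
  have b1 := truncnS_gt (k.+1%:R * v m1).
  have b2 := truncnS_gt (k.+1%:R * v m2).
  rewrite -t2 in a2 b2.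
  move: (Num.trunc (k.+1%:R * v m1)) a1 a2 b1 b2 => t a1 a2 b1 b2.
  rewrite -natr1 in b1 b2.
  have : `|k.+1%:R * (v m1 - v m2)| < 1.
    by rewrite ltr_norml; apply/andP; split; lra.
  rewrite normrM normr_nat => h.
  have kp : 0 < k.+1%:R :> R by rewrite ltr0n.
  have : `|v m1 - v m2| < k.+1%:R^-1 by rewrite -div1r ltr_pdivlMr // mulrC.
  move=> h2; apply: lt_le_trans h2 _.
  by rewrite -(invrK r) lef_pV2 ?ltW // posrE ?invr_gt0.
case: (ltngtP m1 m2) => [lt|gt|eq].
- exact: pig_aux lt close.
- by apply: (@pig_aux alpha r m2 m1 ha gt); rewrite distrC; exact: close.
- by move: ne; rewrite (val_inj eq) eqxx.
Qed.


Lemma per_int (f : R -> R) : (forall x, f (x + 1) = f x) ->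
  forall x (n : int), f (x + n%:~R) = f x.
Proof.
move=> hf.
have hn : forall y (m : nat), f (y + m%:R) = f y.
  move=> y; elim=> [|m IH]; first by rewrite addr0.
  by rewrite -natr1 addrA hf.
move=> x [m|m]; first exact: hn.
rewrite NegzE intrN -[in RHS](subrK (m.+1%:R) x) hn.
done.
Qed.

Lemma rot_bound (alpha r c : R) (f : R -> R) :
  irr alpha -> 0 < r -> r <= 4^-1 ->
  (forall x, 0 <= f x <= 1) -> (forall x, f (x + 1) = f x) ->
  (forall x, f x <= ((dZ (x - c) < r)%R : nat)%:R) ->
  exists E : R, forall M : nat,
    \sum_(0 <= k < M) f (alpha * k%:R) <= 30 * r * M%:R + E.
Proof.
move=> ha r0 r4 f01 fper fsupp.
have [q [p [q0 /andP[th0 thr]]]] := @pigeon alpha r ha r0.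
set th := q%:R * alpha - p%:~R in th0 thr.
have thn0 : th != 0 by rewrite -normr_gt0.
set T := Num.trunc (`|th|^-1).
have hT1 : T%:R * `|th| <= 1.
  have : T%:R <= `|th|^-1 by rewrite truncn_le invr_ge0.
  by rewrite -(ler_pM2r th0) mulVf // gt_eqF.
have hT2 : 2^-1 <= T%:R * `|th|.
  have : `|th|^-1 < T.+1%:R by apply: truncnS_gt.
  rewrite -(ltr_pM2r th0) mulVf ?gt_eqF // -natr1 mulrDl mul1r => h.
  lra.
have Tpos : 0 < T%:R :> R.
  rewrite lt_neqAle ler0n andbT; apply/eqP => e; rewrite -e mul0r in hT2; lra.
have per := @per_int f fper.
have claimA : forall k : nat,
    \sum_(0 <= j < T) f (alpha * (k + j * q)%N%:R) <= 3 * (4 * r / `|th| + 1).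
  move=> k.
  apply: (le_trans _ (count3 (alpha * k%:R - c) th r T thn0 r0 r4 hT1)).
  rewrite big_nat [X in _ <= X]big_nat; apply: ler_sum => j _.
  have -> : alpha * (k + j * q)%N%:R = (alpha * k%:R + j%:R * th) + (j%:Z * p)%:~R.
    by rewrite /th natrD natrM intrM; ring.
  rewrite per (_ : alpha * k%:R - c + j%:R * th = (alpha * k%:R + j%:R * th) - c) //.
  by ring.
have claimB : forall M j : nat,
    \sum_(0 <= k < M) f (alpha * k%:R) <=
    \sum_(0 <= k < M) f (alpha * (k + j * q)%N%:R) + (j * q)%N%:R.
  move=> M j.
  apply: (@le_trans _ _ (\sum_(0 <= k < (j * q) + M) f (alpha * k%:R))).
    rewrite [X in _ <= X](big_cat_nat _ (n := M)) ?leq_addl //=.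
    rewrite lerDl sumr_ge0 // => i _; by have /andP[] := f01 (alpha * i%:R).
  rewrite (big_cat_nat _ (n := j * q)) ?leq_addr //=.
  rewrite addrC lerD //.
    rewrite -{1}[(j * q)%N]add0n big_addn addKn.
    by apply: ler_sum => i _; rewrite addnC.
  apply: (@le_trans _ _ (\sum_(0 <= i < j * q) (1 : R))).
    by apply: ler_sum => i _; have /andP[] := f01 (alpha * i%:R).
  by rewrite sumr_const_nat subn0.
exists (T * q)%N%:R => M.
set S := \sum_(0 <= k < M) f (alpha * k%:R).
have key : T%:R * S <= M%:R * (3 * (4 * r / `|th| + 1)) + T%:R * (T * q)%N%:R.
  have := @ler_sum _ nat (index_iota 0 T) xpredT (fun _ => S)
    (fun j => \sum_(0 <= k < M) f (alpha * (k + j * q)%N%:R) + (j * q)%N%:R)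
    (fun j _ => claimB M j).
  move=> h; rewrite sumr_const_nat subn0 -mulr_natl big_split /= in h.
  apply: (le_trans h); apply: lerD.
    rewrite exchange_big /=.
    apply: (@le_trans _ _ (\sum_(0 <= k < M) (3 * (4 * r / `|th| + 1)))).
      by apply: ler_sum => k _; exact: claimA.
    by rewrite sumr_const_nat subn0; rewrite le_eqVlt; apply/orP; left; apply/eqP; symmetry; exact: mulr_natl.
  apply: (@le_trans _ _ (\sum_(0 <= j < T) (T * q)%N%:R)).
    rewrite big_nat [X in _ <= X]big_nat; apply: ler_sum => j /andP[_ jT].
    by rewrite ler_nat leq_mul2r ltnW ?orbT.
  by rewrite sumr_const_nat subn0; rewrite le_eqVlt; apply/orP; left; apply/eqP; symmetry; exact: mulr_natl.
have w : 3 * (4 * r / `|th| + 1) <= 30 * r * T%:R.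
  set s := `|th|^-1.
  have s1 : 1 <= r * s.
    by rewrite /s -[X in X <= _](mulfV (x := `|th|)) ?gt_eqF // ler_wpM2r // invr_ge0 ltW.
  have s2 : s <= 2 * T%:R.
    rewrite /s -(ler_pM2r th0) mulVf ?gt_eqF //; lra.
  nra.
have : T%:R * S <= T%:R * (30 * r * M%:R + (T * q)%N%:R).
  have h1 := ler_wpM2l (ler0n _ M) w.
  have -> : T%:R * (30 * r * M%:R + (T * q)%N%:R) =
    M%:R * (30 * r * T%:R) + T%:R * (T * q)%N%:R by ring.
  apply: (le_trans key); apply: lerD => //; exact: le_refl.
by rewrite ler_pM2l.
Qed.


Lemma sum_a_bound (a : nat -> nat) (C : nat) (g : nat -> R) (N M : nat) :
  (forall (k : nat) (s : seq nat), uniq s ->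
     all (fun n => (0 < n)%N && (a n == k)) s -> (size s <= C)%N) ->
  (forall k, 0 <= g k) -> (forall n, (1 <= n < N.+2)%N -> (a n < M)%N) ->
  \sum_(1 <= n < N.+2) g (a n) <= C%:R * \sum_(0 <= k < M) g k.
Proof.
move=> hC g0 hM.
apply: (@le_trans _ _ (\sum_(1 <= n < N.+2) \sum_(0 <= k < M) (if k == a n then g k else 0))).
  rewrite big_nat [X in _ <= X]big_nat; apply: ler_sum => n hn.
  by rewrite -big_mkcond /= big_nat1_eq /= hM.
rewrite exchange_big /= mulr_sumr; apply: ler_sum => k _.
rewrite (eq_bigr (fun n => ((k == a n) : nat)%:R * g k)); last first.
  by move=> n _; case: (k == a n); rewrite /= ?mul1r ?mul0r.
rewrite -mulr_suml (sum_ind_count (fun n => k == a n)).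
apply: ler_wpM2r => //; rewrite ler_nat -size_filter.
apply: (hC k); first by apply: filter_uniq; exact: iota_uniq.
apply/allP => n; rewrite mem_filter mem_index_iota => /andP[/eqP e /andP[h1 _]].
by rewrite h1 e eqxx.
Qed.

Lemma max_bound (a : nat -> nat) (B : R) (N : nat) :
  (forall n : nat, (0 < n)%N -> (a n)%:R <= B * n%:R) ->
  (\max_(1 <= n < N.+2) a n)%N%:R <= B * N.+1%:R.
Proof.
move=> hB.
have B0 : 0 <= B by have := hB 1%N isT; rewrite mulr1; apply: le_trans.
set k := Num.trunc (B * N.+1%:R).
have BN : 0 <= B * N.+1%:R by rewrite mulr_ge0.
have : (\max_(1 <= n < N.+2) a n <= k)%N.
  apply/bigmax_leqP_seq => n; rewrite mem_index_iota => /andP[h1 h2] _.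
  rewrite truncn_ge_nat //; apply: (le_trans (hB n h1)).
  by apply: ler_wpM2l => //; rewrite ler_nat -ltnS.
rewrite -(ler_nat R) => h; apply: (le_trans h).
by rewrite truncn_le.
Qed.

End P1.


Arguments dZ {R}. Arguments irr {R}. Arguments rnd {R}.
Section P2.
Variable R : realType.

Lemma f_frac1 (f : R -> R) : (forall x, f (x + 1) = f x) -> forall x, f (frac1 x) = f x.
Proof.
move=> fper x; rewrite /frac1 -(@per_int R f fper (x - _) (Num.floor x)).
by rewrite subrK.
Qed.

Lemma int_bound (a : nat -> nat) (B : R) (C : nat) (alpha : R)
  (mu : probability (measurableTypeR R) R) (f : R -> R) (c r : R) :
  (forall n : nat, (0 < n)%N -> (a n)%:R <= B * n%:R) ->
  (forall (k : nat) (s : seq nat), uniq s ->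
     all (fun n => (0 < n)%N && (a n == k)) s -> (size s <= C)%N) ->
  irr alpha -> 0 < r -> r <= 4^-1 ->
  (forall x, 0 <= f x <= 1) -> (forall x, f (x + 1) = f x) ->
  (forall x, f x <= ((dZ (x - c) < r)%R : nat)%:R) ->
  (fun N : nat => ((N.+1%:R)^-1 *
        \sum_(1 <= n < N.+2) f (frac1 (alpha * (a n)%:R)))%:E)
       @ \oo --> (\int[mu]_(x in `[0%R, 1%R[) (f x)%:E)%E ->
  (\int[mu]_(x in `[0%R, 1%R[) (f x)%:E <= (30 * C%:R * B * r)%:E)%E.
Proof.
move=> hB hC ha r0 r4 f01 fper fsupp hconv.
have [E hE] := @rot_bound R alpha r c f ha r0 r4 f01 fper fsupp.
have B0 : 0 <= B by have := hB 1%N isT; rewrite mulr1; apply: le_trans.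
set D := C%:R * (30 * r + E).
have bnd : forall N : nat, (N.+1%:R)^-1 * \sum_(1 <= n < N.+2) f (frac1 (alpha * (a n)%:R))
    <= 30 * C%:R * B * r + (N.+1%:R)^-1 * D.
  move=> N.
  set Mx := (\max_(1 <= n < N.+2) a n)%N.
  have hM : forall n, (1 <= n < N.+2)%N -> (a n < Mx.+1)%N.
    move=> n hn; rewrite ltnS; apply: (@leq_bigmax_seq _ _ xpredT) => //.
    by rewrite mem_index_iota.
  have s1 : \sum_(1 <= n < N.+2) f (frac1 (alpha * (a n)%:R)) =
      \sum_(1 <= n < N.+2) (fun k : nat => f (alpha * k%:R)) (a n).
    by apply: eq_bigr => n _; rewrite f_frac1.
  have g0 : forall k : nat, 0 <= f (alpha * k%:R).
    by move=> k; have /andP[] := f01 (alpha * k%:R).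
  have s2 := @sum_a_bound R a C (fun k : nat => f (alpha * k%:R)) N Mx.+1 hC g0 hM.
  have s3 := hE Mx.+1.
  have s4 := @max_bound R a B N hB.
  have zp : 0 < N.+1%:R :> R by rewrite ltr0n.
  rewrite ler_pdivrMl // mulrDr mulVKf ?gt_eqF // s1.
  apply: (le_trans s2).
  have C0 : 0 <= C%:R :> R by rewrite ler0n.
  apply: (@le_trans _ _ (C%:R * (30 * r * (B * N.+1%:R + 1) + E))).
    apply: ler_wpM2l => //; apply: (le_trans s3); rewrite lerD2r.
    apply: ler_wpM2l; first by rewrite mulr_ge0 // ltW.
    by rewrite -natr1 lerD2r.
  rewrite /D le_eqVlt; apply/orP; left; apply/eqP; ring.
apply/lee_addgt0Pr => e e0.
apply: (cvge_to_le hconv).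
near=> N.
rewrite -EFinD lee_fin; apply: (le_trans (bnd N)); rewrite lerD2l.
have zp : 0 < N.+1%:R :> R by rewrite ltr0n.
rewrite ler_pdivrMl //.
have hN : D / e <= N%:R by near: N; exact: nbhs_infty_ger.
have : D <= e * N%:R by rewrite -ler_pdivrMl // mulrC.
move=> h; rewrite -natr1 mulrDl mul1r [N%:R * e]mulrC; lra.
Unshelve. all: by end_near.
Qed.

End P2.


Arguments dZ {R}. Arguments irr {R}. Arguments rnd {R}.
Arguments dZ_half {R}. Arguments dZ_min {R}. Arguments dZ_lip {R}. Arguments dZ_per {R}.
Section P3.
Variable R : realType.

Lemma lip_cont (g : R -> R) (k : R) : 0 < k ->
  (forall x y, `|g x - g y| <= k * `|x - y|) -> continuous g.
Proof.
move=> k0 hg x; apply/cvgrPdist_lt => e e0.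
near=> t.
apply: (le_lt_trans (hg x t)); rewrite mulrC -ltr_pdivlMr //.
near: t.
have ek : 0 < e / k by rewrite divr_gt0.
by apply/nbhs_normP; exists (e / k) => // t /=.
Unshelve. all: by end_near.
Qed.

Definition clamp (u : R) : R := if u <= 0 then 0 else if 1 <= u then 1 else u.

Lemma clamp01 (u : R) : 0 <= clamp u <= 1.
Proof.
rewrite /clamp; case: ifPn => h1; first by rewrite lexx ler01.
case: ifPn => h2; first by rewrite ler01 lexx.
rewrite -ltNge in h1; rewrite -ltNge in h2; apply/andP; split; lra.
Qed.

Lemma clamp_lip (u v : R) : `|clamp u - clamp v| <= `|u - v|.
Proof.
have n1 := ler_norm (u - v).
have n2 : v - u <= `|u - v| by rewrite distrC ler_norm.
rewrite /clamp ler_norml.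
case: (lerP u 0) => a1; case: (lerP 1 u) => a2; case: (lerP v 0) => a3; case: (lerP 1 v) => a4;
  apply/andP; split; lra.
Qed.

Definition tf (b h x : R) : R := clamp (2 - dZ (x - b) / h).

Lemma tf_cont (b h : R) : 0 < h -> continuous (tf b h).
Proof.
move=> h0; apply: (@lip_cont _ (h^-1)); first by rewrite invr_gt0.
move=> x y; rewrite /tf; apply: (le_trans (clamp_lip _ _)).
rewrite (_ : 2 - dZ (x - b) / h - (2 - dZ (y - b) / h) = h^-1 * (dZ (y - b) - dZ (x - b))); last by ring.
rewrite normrM [`|h^-1|]ger0_norm; last by rewrite invr_ge0 ltW.
apply: ler_wpM2l; first by rewrite invr_ge0 ltW.
have l1 := dZ_lip (x - b) (y - b); have l2 := dZ_lip (y - b) (x - b).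
have e : `|x - b - (y - b)| = `|x - y| by congr (`|_|); ring.
have e' : `|y - b - (x - b)| = `|x - y| by rewrite distrC; congr (`|_|); ring.
rewrite e in l1; rewrite e' in l2.
rewrite ler_norml; apply/andP; split; lra.
Qed.

Lemma tf_per (b h x : R) : tf b h (x + 1) = tf b h x.
Proof. by rewrite /tf (_ : x + 1 - b = (x - b) + 1) ?dZ_per //; ring. Qed.

Lemma tf01 (b h x : R) : 0 <= tf b h x <= 1.
Proof. exact: clamp01. Qed.

Lemma tf_supp (b h x : R) : 0 < h -> tf b h x <= ((dZ (x - b) < 2 * h)%R : nat)%:R.
Proof.
move=> h0; rewrite /tf; case: ltP => hl /=; first by have /andP[] := clamp01 (2 - dZ (x - b) / h).
rewrite /clamp; have : 2 - dZ (x - b) / h <= 0.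
  rewrite subr_le0 ler_pdivlMr //; lra.
by move=> ->.
Qed.

Lemma tf_one (b h x : R) : 0 < h -> `|x - b| <= h -> tf b h x = 1.
Proof.
move=> h0 hx; rewrite /tf /clamp.
have d : dZ (x - b) <= h.
  apply: le_trans hx; have := dZ_min (x - b) 0; by rewrite subr0.
have : 1 <= 2 - dZ (x - b) / h.
  rewrite lerBrDr -lerBrDl (_ : 2 - 1 = 1) // ?ler_pdivrMr // ?mul1r //; lra.
move=> h1; rewrite ifF ?h1 //; apply/negbTE; rewrite -ltNge; lra.
Qed.

End P3.


Arguments dZ {R}. Arguments irr {R}. Arguments rnd {R}.
Arguments dZ_half {R}. Arguments dZ_min {R}. Arguments dZ_lip {R}. Arguments dZ_per {R}.
Arguments tf {R}. Arguments tf_cont {R}. Arguments tf_per {R}. Arguments tf01 {R}. Arguments tf_supp {R}. Arguments tf_one {R}.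
Section P4.
Variable R : realType.

Lemma mu_itv_bound (a : nat -> nat) (B : R) (C : nat)
  (alpha : R) (mu : probability (measurableTypeR R) R) :
  (forall n : nat, (0 < n)%N -> (a n)%:R <= B * n%:R) ->
  (forall (k : nat) (s : seq nat), uniq s ->
     all (fun n => (0 < n)%N && (a n == k)) s -> (size s <= C)%N) ->
  (forall q : rat, alpha != ratr q) ->
  mu (~` `[0%R, 1%R[) = 0%E ->
  (forall f : R -> R, continuous f -> (forall x, f (x + 1) = f x) ->
     (fun N : nat => ((N.+1%:R)^-1 *
        \sum_(1 <= n < N.+2) f (frac1 (alpha * (a n)%:R)))%:E)
       @ \oo --> (\int[mu]_(x in `[0%R, 1%R[) (f x)%:E)%E) ->
  forall u v : R, u < v ->
  (mu `]u, v]%classic <= ((60 * C%:R * B + 8) * (v - u))%:E)%E.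
Proof.
move=> hB hC ha h0 hconv u v uv.
have B0 : 0 <= B by have := hB 1%N isT; rewrite mulr1; apply: le_trans.
have CB0 : 0 <= 60 * C%:R * B by rewrite mulr_ge0 // mulr_ge0 // ler0n.
case: (leP (v - u) 8^-1) => hl; last first.
  apply: (le_trans (probability_le1 mu (measurable_itv _))).
  rewrite lee_fin; nra.
set h := v - u.
have h0' : 0 < h by rewrite /h subr_gt0.
pose D : set (measurableTypeR R) := `[0%R, 1%R[%classic.
have mD : measurable D by exact: measurable_itv.
have mA : measurable `]u, v]%classic by exact: measurable_itv.
have step1 : (mu `]u, v]%classic <= mu (`]u, v] `&` D))%E.
  apply: (@le_trans _ _ (mu ((`]u, v] `&` D) `|` ~` D))).
    apply: le_measure; rewrite ?inE.
    - exact: mA.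
    - by apply: measurableU; [exact: measurableI | exact: measurableC].
    - by move=> x Ax; case: (pselect (D x)) => Dx; [left | right].
  apply: (le_trans (measureU2 _ _ _)).
  - exact: measurableI.
  - exact: measurableC.
  rewrite [X in (_ + X <= _)%E](_ : _ = 0%E); last exact: h0.
  by rewrite adde0.
have step2 : (mu (`]u, v] `&` D) <= \int[mu]_(x in D) (tf v h x)%:E)%E.
  rewrite -integral_indic //.
  apply: ge0_le_integral => //.
  - by apply/measurable_realfun.measurable_EFinP; exact: measurable_realfun.measurable_indic.
  - apply/measurable_realfun.measurable_EFinP; apply: (measurable_funS measurableT) => //.
    exact: measurable_realfun.continuous_measurable_fun (tf_cont v h h0').
  - move=> x Dx; rewrite lee_fin indicE; case: (boolP (x \in `]u, v]%classic)) => hx /=.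
      rewrite (tf_one v h x h0') // /h.
      move: hx; rewrite inE /= in_itv /= => /andP[a1 a2].
      rewrite ler_norml; apply/andP; split; lra.
    by have /andP[] := tf01 v h x.
have step3 : (\int[mu]_(x in D) (tf v h x)%:E <= (30 * C%:R * B * (2 * h))%:E)%E.
  apply: (@int_bound R a B C alpha mu (tf v h) v (2 * h) hB hC ha).
  - lra.
  - rewrite /h; lra.
  - exact: tf01.
  - exact: tf_per.
  - by move=> x; apply: tf_supp.
  - apply: hconv; [exact: tf_cont | exact: tf_per].
apply: (le_trans step1); apply: (le_trans step2); apply: (le_trans step3).
rewrite lee_fin -/h.
have : 0 <= h by lra.
nra.
Qed.

End P4.


Section P5.
Variable R : realType.

Lemma ac_from_itv (mu : probability (measurableTypeR R) R) (K : R) : 0 <= K ->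
  (forall u v : R, u < v -> (mu `]u, v]%classic <= (K * (v - u))%:E)%E) ->
  mu `<< (@lebesgue_measure R).
Proof.
move=> K0 hK.
apply/null_content_dominatesP => A mA LA0.
apply/eqP; rewrite eq_le measure_ge0 andbT.
apply/lee_addgt0Pr => e e0; rewrite add0e.
set e' := e / (K + 1).
have K1 : 0 < K + 1 by lra.
have e'0 : 0 < e' by rewrite divr_gt0.
have : (lebesgue_measure A < e'%:E)%E by rewrite LA0 lte_fin.
rewrite /lebesgue_measure /lebesgue_stieltjes_measure /measure_extension /mu_ext.
move=> /ereal_inf_lt [_ [F [mF AF] <-] hy].
have mF' : forall k, measurable (F k : set (measurableTypeR R)).
  by move=> k; apply: sub_sigma_algebra; exact: mF.
apply: (@le_trans _ _ (\sum_(0 <= k <oo) mu (F k))%E).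
  have H := @measure_sigma_subadditive _ _ _ mu A F mF' mA AF. exact: H.
apply: (@le_trans _ _ (\sum_(0 <= k <oo) (K%:E * wlength idfun (F k)))%E).
  apply: lee_nneseries => [k _ _|k _]; first exact: measure_ge0.
  have := mF k; move/ocitvP => [->|[x x12 ->]].
    by rewrite measure0 wlength0 mule0.
  rewrite wlength_itv_bnd /=; last exact: ltW.
  by rewrite -EFinM; apply: hK.
rewrite nneseriesZl; last by move=> k _; exact: wlength_ge0.
apply: (@le_trans _ _ (K%:E * e'%:E)%E).
  by apply: lee_wpmul2l; [rewrite lee_fin | exact: ltW].
rewrite -EFinM lee_fin /e' mulrA ler_pdivrMr //.
nra.
Qed.

End P5.

Theorem mainTheorem11 (R : realType) (a : nat -> nat) (B : R) (C : nat)
  (alpha : R) (mu : probability (measurableTypeR R) R) :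
  (forall n : nat, (0 < n)%N -> (a n)%:R <= B * n%:R) ->
  (forall (k : nat) (s : seq nat), uniq s ->
     all (fun n => (0 < n)%N && (a n == k)) s -> (size s <= C)%N) ->
  (forall q : rat, alpha != ratr q) ->
  mu (~` `[0%R, 1%R[) = 0%E ->
  (forall f : R -> R, continuous f -> (forall x, f (x + 1) = f x) ->
     (fun N : nat => ((N.+1%:R)^-1 *
        \sum_(1 <= n < N.+2) f (frac1 (alpha * (a n)%:R)))%:E)
       @ \oo --> (\int[mu]_(x in `[0%R, 1%R[) (f x)%:E)%E) ->
  mu `<< (@lebesgue_measure R).
Proof.
move=> hB hC ha h0 hconv.
have B0 : 0 <= B by have := hB 1%N isT; rewrite mulr1; apply: le_trans.
apply: (@ac_from_itv R mu (60 * C%:R * B + 8)).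
  by apply: addr_ge0 => //; rewrite mulr_ge0 // mulr_ge0 // ler0n.
exact: (@mu_itv_bound R a B C alpha mu hB hC ha h0 hconv).
Qed.
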